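(* Let $V$ be an $N$-dimensional vector space over $\mathbb{F}_q$ and $\mathcal{F},\mathcal{G}\subset V$ spanning families with extended families $\overline{\mathcal{F}},\overline{\mathcal{G}}$. If there is a matroid isomorphism $\psi:\overline{\mathcal{F}}\to\overline{\mathcal{G}}$ with $\psi(\mathcal{F})=\mathcal{G}$, then $|S^{\mathcal{F}}_t(0)|=|S^{\mathcal{G}}_t(0)|$ for every $t\in\mathbb{N}$.
   Context: A spanning family is a set of pairwise linearly independent nonzero vectors spanning $V$; $\operatorname{wt}_{\mathcal{F}}(v)=\min\{|I|:I\subseteq\mathcal{F},v\in\langle I\rangle\}$ and $S^{\mathcal{F}}_t(0)=\{v\in V:\operatorname{wt}_{\mathcal{F}}(v)=t\}$. A hyperplane generated by vectors in $\mathcal{F}$ is the span of $N-1$ linearly independent vectors of $\mathcal{F}$; the extended family $\overline{\mathcal{F}}$ is the set of vectors $v$ (one representative per line) such that $\langle v\rangle$ is an intersection of hyperplanes generated by vectors in $\mathcal{F}$ (one has $\mathcal{F}\subseteq\overline{\mathcal{F}}$). The matroid of a set of vectors has that set as ground set and its linearly independent subsets as independent sets; a matroid isomorphism $\psi:\overline{\mathcal{F}}\to\overline{\mathcal{G}}$ is a bijection such that a subset $I\subseteq\overline{\mathcal{F}}$ is linearly independent iff $\psi(I)$ is. *)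

(* Defs.v *)
From HB Require Import structures.
From mathcomp Require Import all_boot all_order all_algebra.
Set Implicit Arguments. Unset Strict Implicit. Unset Printing Implicit Defensive.
Import GRing.Theory.
Local Open Scope ring_scope.

Section Defs.
Variables (K : finFieldType) (N : nat).
Local Notation V := 'rV[K]_N.

Definition indep (I : {set V}) : bool := free (enum I).

Definition spanning_family (F : {set V}) : Prop :=
  [/\ forall v, v \in F -> v != 0,
      forall u v, u \in F -> v \in F -> u != v -> free [:: u; v]
    & <<enum F>>%VS = fullv].

(* weight: min |I| over I subset F with v in <I> (always attained when F spans) *)
Definition wt (F : {set V}) (v : V) : nat :=
  \big[minn/N.+1]_(I : {set V} | (I \subset F) && (v \in <<enum I>>%VS)) #|I|.

Definition sphere (F : {set V}) (t : nat) : {set V} := [set v | wt F v == t].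

Definition hyperplane_gen (F : {set V}) (H : {vspace V}) : Prop :=
  exists I : {set V}, [/\ I \subset F, #|I| = N.-1, indep I & H = <<enum I>>%VS].

Definition line_of_hyperplanes (F : {set V}) (v : V) : Prop :=
  v != 0 /\ exists Hs : seq {vspace V},
    (forall H, H \in Hs -> hyperplane_gen F H) /\
    (\bigcap_(H <- Hs) H)%VS = <[v]>%VS.

(* Fbar is an extended family of F: one representative per such line,
   with representatives chosen so that F is contained in Fbar. *)
Definition extended_family (F Fbar : {set V}) : Prop :=
  [/\ F \subset Fbar,
      forall w, w \in Fbar -> line_of_hyperplanes F w,
      forall u w, u \in Fbar -> w \in Fbar -> <[u]>%VS = <[w]>%VS -> u = w
    & forall v, line_of_hyperplanes F v -> exists2 w, w \in Fbar & <[w]>%VS = <[v]>%VS].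

Definition matroid_iso (Fbar Gbar : {set V}) (psi : V -> V) : Prop :=
  [/\ {in Fbar &, injective psi}, psi @: Fbar = Gbar
    & forall I : {set V}, I \subset Fbar -> indep I = indep (psi @: I)].

End Defs.

(* Main.v *)
Require Import Defs.
From mathcomp Require Import all_boot all_order all_algebra all_field.
From mathcomp Require Import zify.
Set Implicit Arguments. Unset Strict Implicit. Unset Printing Implicit Defensive.
Import GRing.Theory.


Section Lin.
Variables (K : finFieldType) (N : nat).
Local Notation V := 'rV[K]_N.

Lemma dimV : \dim (fullv : {vspace V}) = N.
Proof. by rewrite dimvf /dim /= mul1n. Qed.

Lemma dim_free (X : seq V) : free X -> \dim <<X>>%VS = size X.
Proof. by move/eqP. Qed.

Lemma filter_cap (B : seq V) (p q : pred V) : free B ->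
  (<<filter p B>> :&: <<filter q B>> = <<filter (predI p q) B>>)%VS.
Proof.
move=> fB; apply/eqP; rewrite eq_sym eqEdim; apply/andP; split.
  rewrite subv_cap; apply/andP; split; apply: sub_span => x;
  by rewrite !mem_filter /= => /andP[/andP[px qx] xB]; rewrite ?px ?qx xB.
have := dimv_sum_cap <<filter p B>>%VS <<filter q B>>%VS.
rewrite -span_cat.
have -> : <<filter p B ++ filter q B>>%VS = <<filter (predU p q) B>>%VS.
  by apply: eq_span => x; rewrite mem_cat !mem_filter /= -andb_orl.
rewrite !(dim_free (filter_free _ fB)) !size_filter -(count_predUI p q) => /addnI ->.
done.
Qed.

Fixpoint ext (s r : seq V) : seq V :=
  if r is x :: r' then (if x \in <<s>>%VS then ext s r' else ext (x :: s) r') else s.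

Lemma ext_props r s : free s ->
  [/\ free (ext s r), {subset s <= ext s r}, {subset ext s r <= s ++ r}
    & {subset r <= <<ext s r>>%VS}].
Proof.
elim: r s => [|x r IH] s fs /=.
  by split=> // y; rewrite cats0.
case: ifP => hx.
  have [f1 s1 s2 s3] := IH s fs; split=> // y.
    by move/s2; rewrite !mem_cat in_cons => /orP[->|->]; rewrite ?orbT.
  rewrite in_cons => /orP[/eqP->|]; last exact: s3.
  by apply: (subvP (sub_span s1)).
have fxs : free (x :: s) by rewrite free_cons hx.
have [f1 s1 s2 s3] := IH _ fxs; split=> // y.
    by move=> ys; apply: s1; rewrite in_cons ys orbT.
  move/s2; rewrite cat_cons in_cons !mem_cat in_cons.
  by case/orP=> [->|/orP[]->]; rewrite ?orbT.
rewrite in_cons => /orP[/eqP->|]; last exact: s3.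
by apply: memv_span; apply: s1; rewrite in_cons eqxx.
Qed.

Lemma basis_ext (s r : seq V) : free s -> exists B : seq V,
  [/\ free B, {subset s <= B}, {subset B <= s ++ r} & <<B>>%VS = <<s ++ r>>%VS].
Proof.
move=> fs; have [f1 s1 s2 s3] := ext_props r fs.
exists (ext s r); split=> //; apply/eqP; rewrite eqEsubv; apply/andP; split.
  exact: sub_span.
apply/span_subvP => x; rewrite mem_cat => /orP[/s1|/s3] //; exact: memv_span.
Qed.

Lemma dim_lt_sub (U X : {vspace V}) : (U <= X)%VS -> ~~ (X <= U)%VS -> \dim U < \dim X.
Proof.
move=> sUX nXU; rewrite ltnNge; apply/negP => h.
have /eqP e : U == X by rewrite eqEdim sUX h.
by rewrite e subvv in nXU.
Qed.

Lemma memv_bigcap_seq (T : Type) (r : seq T) (P : pred T) (f : T -> {vspace V}) v :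
  (v \in (\bigcap_(x <- r | P x) f x)%VS) = all (fun x => P x ==> (v \in f x)) r.
Proof.
elim: r => [|x r IH]; first by rewrite big_nil memvf.
by rewrite big_cons /=; case: (P x) => //=; rewrite memv_cap IH.
Qed.

Lemma memv_span_add (X : seq V) w :
  (w \in <<X>>%VS) = (\dim <<w :: X>>%VS == \dim <<X>>%VS).
Proof.
rewrite span_cons; have sub := addvSr <[w]>%VS <<X>>%VS.
apply/idP/eqP => [hw|e].
  have /eqP -> // : (<[w]> + <<X>> == <<X>>)%VS.
  by rewrite eqEsubv subv_add -memvE hw subvv sub.
have /eqP e2 : (<<X>> == <[w]> + <<X>>)%VS by rewrite eqEdim sub e leqnn.
by rewrite memvE e2 addvSl.
Qed.

End Lin.

Section Hyp.
Variables (K : finFieldType) (N : nat).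
Local Notation V := 'rV[K]_N.
Variable F : {set V}.
Hypothesis sF : spanning_family F.

Definition isC (W : {vspace V}) := exists Hs : seq {vspace V},
  (forall H, H \in Hs -> hyperplane_gen F H) /\ W = (\bigcap_(H <- Hs) H)%VS.

Lemma spanF : <<enum F>>%VS = fullv.
Proof. by case: sF. Qed.

Lemma hyp_of_basis (B : seq V) b : free B -> {subset B <= F} -> <<B>>%VS = fullv ->
  b \in B -> hyperplane_gen F <<filter (predC1 b) B>>%VS.
Proof.
move=> fB sBF eB bB; exists [set x in filter (predC1 b) B]; split.
- by apply/subsetP => x; rewrite inE mem_filter => /andP[_ /sBF].
- rewrite cardsE (card_uniqP (filter_uniq _ (free_uniq fB))).
  by rewrite -rem_filter ?(free_uniq fB) // size_rem // -(dim_free fB) eB dimV.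
- rewrite /indep -(@perm_free _ _ (filter (predC1 b) B)) ?filter_free //.
  apply: uniq_perm; rewrite ?enum_uniq ?filter_uniq ?(free_uniq fB) //.
  by move=> x; rewrite mem_enum inE.
- by apply: eq_span => x; rewrite mem_enum inE.
Qed.

Lemma cap_hyps (B : seq V) (bs : seq V) : free B ->
  (<<B>> :&: \bigcap_(b <- bs) <<filter (predC1 b) B>>)%VS
   = <<filter [pred x | x \notin bs] B>>%VS.
Proof.
move=> fB; elim: bs => [|b bs IH].
  by rewrite big_nil capvf; apply: eq_span => x; rewrite mem_filter.
rewrite big_cons capvA (capvC <<B>>%VS) -capvA IH filter_cap //.
apply: eq_span => x; rewrite !mem_filter /= in_cons negb_or.
by case: (x == b); case: (x \in bs).
Qed.

Lemma exists_basis (s : seq V) : free s -> {subset s <= F} -> exists B : seq V,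
  [/\ free B, {subset s <= B}, {subset B <= F} & <<B>>%VS = fullv].
Proof.
move=> fs ssF; have [B [fB s1 s2 s3]] := basis_ext (enum F) fs.
exists B; split=> //.
  by move=> x /s2; rewrite mem_cat mem_enum => /orP[/ssF|].
apply/eqP; rewrite eqEsubv subvf /= s3 -spanF; apply: sub_span => x xF.
by rewrite mem_cat xF orbT.
Qed.

Lemma span_isC (I : {set V}) : I \subset F -> isC <<enum I>>%VS.
Proof.
move=> sIF.
have [BI [fBI _ sBI eBI]] := basis_ext (enum I) (nil_free _).
have [B [fB sBIB sBF eB]] : exists B : seq V,
   [/\ free B, {subset BI <= B}, {subset B <= F} & <<B>>%VS = fullv].
  apply: exists_basis => // x /sBI; rewrite /= mem_enum => xI.
  exact: (subsetP sIF).
pose bs := filter [pred x | x \notin BI] B.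
exists (map (fun b => <<filter (predC1 b) B>>%VS) bs); split.
  move=> H /mapP[b]; rewrite mem_filter => /andP[_ bB] ->.
  exact: hyp_of_basis.
rewrite big_map -(capfv (\bigcap_(j <- bs) _)%VS) -{1}eB cap_hyps //=.
rewrite -eBI; apply: eq_span => x; rewrite mem_filter /= mem_filter /= negb_and negbK.
by case: (boolP (x \in BI)) => h; rewrite ?h /= ?(sBIB x h) // andNb.
Qed.

Lemma isC_cap W1 W2 : isC W1 -> isC W2 -> isC (W1 :&: W2)%VS.
Proof.
move=> [H1 [h1 ->]] [H2 [h2 ->]]; exists (H1 ++ H2); split; last by rewrite big_cat.
by move=> H; rewrite mem_cat => /orP[/h1|/h2].
Qed.

Lemma isC_full : isC fullv.
Proof. by exists [::]; rewrite big_nil. Qed.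

Lemma isC_hyp H : hyperplane_gen F H -> isC H.
Proof.
move=> hH; exists [:: H]; split; last by rewrite big_cons big_nil capvf.
by move=> H'; rewrite inE => /eqP->.
Qed.

Lemma avoid_hyp (v : V) : v != 0%R -> exists2 H, hyperplane_gen F H & v \notin H.
Proof.
move=> nv; have [B [fB _ sBF eB]] := exists_basis (nil_free _) (fun x (h : x \in [::]) => match notF h with end).
have := cap_hyps B fB.
have -> : <<filter [pred x | x \notin B] B>>%VS = 0%VS.
  by rewrite -span_nil; apply: eq_span => x; rewrite mem_filter /= andNb.
move=> e.
case: (boolP (all (fun b => v \in <<filter (predC1 b) B>>%VS) B)) => [hall|].
  have : v \in 0%VS.
    rewrite -e memv_cap eB memvf /= memv_bigcap_seq.
    by apply/allP => b bB; rewrite (allP hall).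
  by rewrite memv0 (negbTE nv).
case/allPn => b bB nb; exists <<filter (predC1 b) B>>%VS => //.
exact: hyp_of_basis.
Qed.

Lemma dim_hyp H : hyperplane_gen F H -> \dim H = N.-1.
Proof.
by case=> I [_ cI iI ->]; rewrite (dim_free iI) -cardE.
Qed.

Lemma dim_cap_hyp (W H : {vspace V}) : hyperplane_gen F H -> ~~ (W <= H)%VS ->
  \dim (W :&: H)%VS = (\dim W).-1.
Proof.
move=> hH nWH; have := dimv_sum_cap W H; rewrite (dim_hyp hH).
have h1 : \dim (W + H)%VS <= N by have := dimvS (subvf (W + H)%VS); rewrite dimV.
have h2 : \dim H < \dim (W + H)%VS.
  apply: dim_lt_sub; first exact: addvSr.
  by apply: contra nWH => h; apply: subv_trans h; apply: addvSl.
rewrite (dim_hyp hH) in h2; lia.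
Qed.

End Hyp.

Section Core.
Variables (K : finFieldType) (N : nat).
Local Notation V := 'rV[K]_N.
Variables F Fbar : {set V}.
Hypothesis sF : spanning_family F.
Hypothesis eF : extended_family F Fbar.

Definition spF (W : {vspace V}) := <<enum [set w in Fbar | w \in W]>>%VS.

Lemma spF_mono W1 W2 : (W1 <= W2)%VS -> (spF W1 <= spF W2)%VS.
Proof.
move=> s; apply: sub_span => x; rewrite !mem_enum !inE => /andP[-> /=].
exact: (subvP s).
Qed.

Lemma isC_spanned W : isC F W -> (W <= spF W)%VS.
Proof.
suff: forall n W, \dim W <= n -> isC F W -> (W <= spF W)%VS.
  by move=> h hW; apply: (h (\dim W)).
elim=> [|n IH] {}W hd hC.
  have /eqP -> : W == 0%VS by rewrite -dimv_eq0 -leqn0.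
  exact: sub0v.
case: (ltnP (\dim W) 2) => hd2.
  case: (boolP (W == 0%VS)) => [/eqP -> | nW]; first exact: sub0v.
  have [v [vW nv]] : exists v, v \in W /\ v != 0%R.
    by exists (vpick W); rewrite memv_pick vpick0.
  have eW : W = <[v]>%VS.
    apply/eqP; rewrite eq_sym eqEdim -memvE vW dim_vline nv /=.
    by move: hd2; rewrite ltnS.
  have [w wF ew] : exists2 w, w \in Fbar & <[w]>%VS = <[v]>%VS.
    case: eF => _ _ _ h4; apply: h4; split=> //.
    by case: hC => Hs [h1 h2]; exists Hs; split=> //; rewrite -h2.
  have sWw : (W <= <[w]>)%VS by rewrite ew -eW subvv.
  apply: subv_trans sWw _.
  rewrite -memvE; apply: memv_span.
  by rewrite mem_enum inE wF /= eW -ew memv_line.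
have nW : W != 0%VS by rewrite -dimv_eq0 -lt0n; apply: leq_trans hd2.
have nv : vpick W != 0%R by rewrite vpick0.
have [H1 hH1 n1] := avoid_hyp sF nv.
have nWH1 : ~~ (W <= H1)%VS.
  by apply: contra n1 => s; exact: (subvP s _ (memv_pick W)).
set W1 := (W :&: H1)%VS.
have d1 : \dim W1 = (\dim W).-1 := dim_cap_hyp hH1 nWH1.
have nW1 : W1 != 0%VS by rewrite -dimv_eq0 d1 -lt0n -subn1 subn_gt0.
have nv1 : vpick W1 != 0%R by rewrite vpick0.
have [H2 hH2 n2] := avoid_hyp sF nv1.
have nW1H2 : ~~ (W1 <= H2)%VS.
  by apply: contra n2 => s; exact: (subvP s _ (memv_pick W1)).
have nWH2 : ~~ (W <= H2)%VS.
  by apply: contra nW1H2 => s; apply: subv_trans s; apply: capvSl.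
set W2 := (W :&: H2)%VS.
have d2 : \dim W2 = (\dim W).-1 := dim_cap_hyp hH2 nWH2.
have C1 : isC F W1 by apply: isC_cap hC (isC_hyp hH1).
have C2 : isC F W2 by apply: isC_cap hC (isC_hyp hH2).
have s1 : (W1 <= spF W)%VS.
  apply: subv_trans (IH _ _ C1) (spF_mono (capvSl _ _)).
  by rewrite d1 -subn1 leq_subLR add1n.
have s2 : (W2 <= spF W)%VS.
  apply: subv_trans (IH _ _ C2) (spF_mono (capvSl _ _)).
  by rewrite d2 -subn1 leq_subLR add1n.
have nW12 : ~~ (W1 <= W2)%VS.
  by apply: contra nW1H2 => s; apply: subv_trans s (capvSr _ _).
have lt : \dim W2 < \dim (W1 + W2)%VS.
  apply: dim_lt_sub; first exact: addvSr.
  by apply: contra nW12 => s; apply: subv_trans (addvSl _ _) s.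
have sub : (W1 + W2 <= W)%VS by rewrite subv_add !capvSl.
have /eqP e : (W1 + W2 == W)%VS.
  rewrite eqEdim sub /=; rewrite d2 (prednK (ltnW hd2)) in lt; exact: lt.
by rewrite -{1}e subv_add s1 s2.
Qed.

Lemma isC_eq W : isC F W -> W = spF W.
Proof.
move=> hC; apply/eqP; rewrite eqEsubv isC_spanned //=.
by apply/span_subvP => x; rewrite mem_enum inE => /andP[].
Qed.

End Core.

Section Mat.
Variables (K : finFieldType) (N : nat).
Local Notation V := 'rV[K]_N.
Variables (Fbar Gbar : {set V}) (psi : V -> V).
Hypothesis iso : matroid_iso Fbar Gbar psi.

Lemma set_basis (X : {set V}) : exists J : {set V},
  [/\ J \subset X, indep J & <<enum J>>%VS = <<enum X>>%VS].
Proof.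
have [B [fB _ sB eB]] := basis_ext (enum X) (nil_free _).
exists [set x in B]; split.
- by apply/subsetP => x; rewrite inE => /sB; rewrite /= mem_enum.
- rewrite /indep (@perm_free _ _ _ B) //.
  by apply: uniq_perm; rewrite ?enum_uniq ?free_uniq // => x; rewrite mem_enum inE.
- by rewrite -[RHS]/(<<[::] ++ enum X>>%VS) -eB; apply: eq_span => x; rewrite mem_enum inE.
Qed.

Lemma dim_indep (J : {set V}) : indep J -> \dim <<enum J>>%VS = #|J|.
Proof. by move=> h; rewrite (dim_free h) cardE. Qed.

Lemma preim_imset (f : V -> V) (A J : {set V}) :
  J \subset f @: A -> f @: (A :&: f @^-1: J) = J.
Proof.
move=> sJ; apply/setP => y; apply/imsetP/idP => [[x]|yJ].
  by rewrite !inE => /andP[_ h] ->.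
have /imsetP[x xA e] := subsetP sJ y yJ.
by exists x => //; rewrite !inE xA -e yJ.
Qed.

Lemma dim_psi (X : {set V}) : X \subset Fbar ->
  \dim <<enum X>>%VS = \dim <<enum (psi @: X)%SET>>%VS.
Proof.
case: iso => inj _ hind sX.
have injX : forall Y : {set V}, Y \subset Fbar -> {in Y &, injective psi}.
  by move=> Y sY x y xY yY; apply: (inj x y (subsetP sY _ xY) (subsetP sY _ yY)).
apply/eqP; rewrite eqn_leq; apply/andP; split.
  have [J [sJ iJ eJ]] := set_basis X.
  have sJF : J \subset Fbar := subset_trans sJ sX.
  rewrite -eJ (dim_indep iJ) -(card_in_imset (injX _ sJF)).
  have iJ' : indep (psi @: J) by rewrite -hind.
  rewrite -(dim_indep iJ'); apply: dimvS; apply: sub_span => x.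
  by rewrite !mem_enum; apply: (subsetP (imsetS psi sJ)).
have [J' [sJ' iJ' eJ']] := set_basis (psi @: X).
set J := X :&: psi @^-1: J'.
have eJ : psi @: J = J' := preim_imset sJ'.
have sJX : J \subset X := subsetIl _ _.
have sJF : J \subset Fbar := subset_trans sJX sX.
have iJ : indep J by rewrite hind // eJ.
rewrite -eJ' (dim_indep iJ') -eJ (card_in_imset (injX _ sJF)) -(dim_indep iJ).
by apply: dimvS; apply: sub_span => x; rewrite !mem_enum; apply: (subsetP sJX).
Qed.

Lemma mem_set_span (X : {set V}) w :
  (w \in <<enum X>>%VS) = (\dim <<enum (w |: X)>>%VS == \dim <<enum X>>%VS).
Proof.
rewrite memv_span_add; congr (\dim _ == _); apply: eq_span => x.
by rewrite mem_enum in_cons !inE mem_enum.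
Qed.

Lemma mem_psi (I : {set V}) w : I \subset Fbar -> w \in Fbar ->
  (w \in <<enum I>>%VS) = (psi w \in <<enum (psi @: I)%SET>>%VS).
Proof.
move=> sI wF; rewrite !mem_set_span -imsetU1 -(dim_psi sI) -dim_psi //.
by rewrite subUset sub1set wF.
Qed.

End Mat.

Lemma card_types (T X : finType) (ta : T -> {set X}) (P : pred {set X}) :
  #|[set v | P (ta v)]| = \sum_(S | P S) #|[set v | ta v == S]|.
Proof.
rewrite -sum1_card (partition_big ta P) /=; last by move=> v; rewrite inE.
apply: eq_bigr => S PS; rewrite -sum1_card; apply: eq_bigl => v.
by rewrite !inE; case: eqP => [->|]; rewrite ?PS ?andbF.
Qed.

Lemma count_types (T X : finType) (ta tb : T -> {set X}) :
  (forall S : {set X}, #|[set v | S \subset ta v]| = #|[set v | S \subset tb v]|) ->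
  forall S, #|[set v | ta v == S]| = #|[set v | tb v == S]|.
Proof.
move=> hf S; have [k] := ubnP #|~: S|; elim: k S => // k IH S hS.
have split_ (t : T -> {set X}) : #|[set v | S \subset t v]| =
    #|[set v | t v == S]| + \sum_(U : {set X} | (S \subset U) && (U != S)) #|[set v | t v == U]|.
  by rewrite (card_types t (fun U : {set X} => S \subset U)) (bigD1 S) ?subxx.
have := hf S; rewrite !split_.
have -> : \sum_(U : {set X} | (S \subset U) && (U != S)) #|[set v | ta v == U]| =
          \sum_(U : {set X} | (S \subset U) && (U != S)) #|[set v | tb v == U]|.
  apply: eq_bigr => U /andP[sSU nUS]; apply: IH.
  have : ~: U \proper ~: S by rewrite properC properEneq eq_sym nUS sSU.
  by move/proper_card => h; lia.
by move/addIn.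
Qed.

Lemma leq_bigmin_seq (I : Type) (r : seq I) (P : pred I) (f : I -> nat) x n :
  (n <= \big[minn/x]_(i <- r | P i) f i) = (n <= x) && all (fun i => P i ==> (n <= f i)) r.
Proof.
elim: r => [|i r IH]; first by rewrite big_nil andbT.
by rewrite big_cons /=; case: (P i) => /=; rewrite ?leq_min IH // andbCA.
Qed.

Lemma bigmin_eq (I1 I2 : finType) (P1 : pred I1) (P2 : pred I2)
    (f1 : I1 -> nat) (f2 : I2 -> nat) x :
  (forall i, P1 i -> exists2 j, P2 j & f2 j = f1 i) ->
  (forall j, P2 j -> exists2 i, P1 i & f1 i = f2 j) ->
  \big[minn/x]_(i | P1 i) f1 i = \big[minn/x]_(j | P2 j) f2 j.
Proof.
move=> h1 h2.
have key : forall n, (n <= \big[minn/x]_(i | P1 i) f1 i) =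
                      (n <= \big[minn/x]_(j | P2 j) f2 j).
  move=> n; rewrite !leq_bigmin_seq; congr (_ && _).
  apply/allP/allP => h i _; apply/implyP.
    by move=> /h2[j Pj <-]; apply: (implyP (h j (mem_index_enum j))).
  by move=> /h1[j Pj <-]; apply: (implyP (h j (mem_index_enum j))).
by apply/eqP; rewrite eqn_leq -key leqnn key leqnn.
Qed.

Theorem proposition6p7 (K : finFieldType) (N : nat)
    (F G Fbar Gbar : {set 'rV[K]_N}) (psi : 'rV[K]_N -> 'rV[K]_N) :
  spanning_family F -> spanning_family G ->
  extended_family F Fbar -> extended_family G Gbar ->
  matroid_iso Fbar Gbar psi -> psi @: F = G ->
  forall t : nat, #|sphere F t| = #|sphere G t|.
Proof.
move=> sF sG eF eG iso eFG t.
have FFbar : F \subset Fbar by case: eF.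
have [inj imFG hind] := iso.
have injF : {in F &, injective psi}.
  by move=> x y xF yF; apply: (inj x y (subsetP FFbar _ xF) (subsetP FFbar _ yF)).
pose aT (v : 'rV[K]_N) := [set I : {set 'rV[K]_N} | (I \subset F) ==> (v \in <<enum I>>%VS)].
pose bT (v : 'rV[K]_N) :=
  [set I : {set 'rV[K]_N} | (I \subset F) ==> (v \in <<enum (psi @: I)%SET>>%VS)].
pose WF (S : {set {set 'rV[K]_N}}) := (\bigcap_(I in S | I \subset F) <<enum I>>)%VS.
pose WG (S : {set {set 'rV[K]_N}}) :=
  (\bigcap_(I in S | I \subset F) <<enum (psi @: I)%SET>>)%VS.
have memWF S v : (v \in WF S) = (S \subset aT v).
  rewrite memv_bigcap_seq; apply/allP/subsetP => h I.
    move=> IS; rewrite inE; apply/implyP => sIF.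
    by have := h I (mem_index_enum I); rewrite IS sIF.
  by move=> _; apply/implyP => /andP[IS sIF]; have := h I IS; rewrite inE sIF.
have memWG S v : (v \in WG S) = (S \subset bT v).
  rewrite memv_bigcap_seq; apply/allP/subsetP => h I.
    move=> IS; rewrite inE; apply/implyP => sIF.
    by have := h I (mem_index_enum I); rewrite IS sIF.
  by move=> _; apply/implyP => /andP[IS sIF]; have := h I IS; rewrite inE sIF.
have aTbT w : w \in Fbar -> aT w = bT (psi w).
  move=> wF; apply/setP => I; rewrite !inE; case sIF: (I \subset F) => //=.
  by rewrite (mem_psi iso (subset_trans sIF FFbar) wF).
have hf (S : {set {set 'rV[K]_N}}) : #|[set v | S \subset aT v]| = #|[set v | S \subset bT v]|.
  have -> : #|[set v | S \subset aT v]| = #|WF S|.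
    by apply: eq_card => v; rewrite inE memWF.
  have -> : #|[set v | S \subset bT v]| = #|WG S|.
    by apply: eq_card => v; rewrite inE memWG.
  rewrite !card_vspace; congr (_ ^ _).
  have CF : isC F (WF S).
    apply: (big_ind (isC F)); [exact: isC_full | exact: isC_cap |].
    by move=> I /andP[_ h]; exact: span_isC sF I h.
  have CG : isC G (WG S).
    apply: (big_ind (isC G)); [exact: isC_full | exact: isC_cap |].
    move=> I /andP[_ h]; apply: span_isC sG _ _.
    by rewrite -eFG; apply: imsetS.
  rewrite (isC_eq sF eF CF) (isC_eq sG eG CG) /spF.
  rewrite (dim_psi iso); last by apply/subsetP => x; rewrite inE => /andP[].
  apply: (congr1 (fun A : {set 'rV[K]_N} => \dim <<enum A>>%VS)).
  apply/setP => y; apply/imsetP/idP.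
    case=> w; rewrite !inE => /andP[wF wW] ->.
    by rewrite -imFG imset_f //= memWG -aTbT // -memWF.
  rewrite inE -imFG => /andP[/imsetP[w wF ->] yW].
  by exists w => //; rewrite inE wF /= memWF aTbT // -memWG.
pose mF (Tt : {set {set 'rV[K]_N}}) :=
  \big[minn/N.+1]_(I : {set 'rV[K]_N} | (I \subset F) && (I \in Tt)) #|I|.
have wtF v : wt F v = mF (aT v).
  by apply: eq_bigl => I; rewrite inE; case: (I \subset F).
have wtG v : wt G v = mF (bT v).
  apply: bigmin_eq => [J /andP[sJG vJ] | I /andP[sIF]].
    have sJ : J \subset psi @: F by rewrite eFG.
    have eJ := preim_imset sJ.
    exists (F :&: psi @^-1: J); last first.
      by rewrite -{2}eJ card_in_imset //; apply: sub_in2 injF => x; rewrite inE => /andP[].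
    by rewrite subsetIl inE subsetIl /= eJ.
  rewrite inE sIF /= => vI; exists (psi @: I).
    by rewrite -eFG imsetS.
  by rewrite card_in_imset //; apply: sub_in2 injF => x; apply: (subsetP sIF).
have -> : #|sphere F t| = #|[set v | mF (aT v) == t]|.
  by apply: eq_card => v; rewrite !inE wtF.
have -> : #|sphere G t| = #|[set v | mF (bT v) == t]|.
  by apply: eq_card => v; rewrite !inE wtG.
rewrite (card_types aT (fun Tt => mF Tt == t)) (card_types bT (fun Tt => mF Tt == t)).
by apply: eq_bigr => S _; apply: count_types.
Qed.
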